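(* Let $W$ be a complex vector space and $\phi(x,z)$ an associate of the additive formal group with $\phi(x,z)\ne x$. Then every compatible subset of $\mathcal{E}(W)$ is $\phi$-quasi compatible, and every quasi compatible subset of $\mathcal{E}(W)$ is $\phi$-quasi compatible.
   Context: $\mathcal{E}(W)=\mathrm{Hom}(W,W((x)))$. An associate is $\phi(x,z)\in\mathbb{C}((x))[[z]]$ with $\phi(x,0)=x$ and $\phi(\phi(x,x_2),x_0)=\phi(x,x_0+x_2)$; for $p\in\mathbb{C}[[x,y]]$, $p(\phi(x,z),x)\in\mathbb{C}((x))[[z]]$ is the substitution. A finite sequence $a_1(x),\dots,a_r(x)$ in $\mathcal{E}(W)$ is compatible if $\prod_{i<j}(x_i-x_j)^ka_1(x_1)\cdots a_r(x_r)\in\mathrm{Hom}(W,W((x_1,\dots,x_r)))$ for some $k\in\mathbb{N}$; quasi compatible if $\prod_{i<j}p(x_i,x_j)a_1(x_1)\cdots a_r(x_r)\in\mathrm{Hom}(W,W((x_1,\dots,x_r)))$ for some nonzero $p\in\mathbb{C}[[x,y]]$; $\phi$-quasi compatible if this holds for some $p$ with $p(\phi(x,z),x)\ne0$. A subset is (quasi, $\phi$-quasi) compatible if every finite sequence in it is. *)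

(* Defs.v *)
From mathcomp Require Import all_boot all_order all_algebra.
From mathcomp Require Import boolp classical_sets fsbigop reals.
From mathcomp Require Export complex.
Set Implicit Arguments. Unset Strict Implicit. Unset Printing Implicit Defensive.
Import GRing.Theory Num.Theory.
Local Open Scope ring_scope.
Local Open Scope classical_set_scope.

(* Infinite formal sums are written with the finitely-supported sum
   \sum_(i \in setT) F i of fsbigop; in every place they are used below the
   support is finite for the objects in question, so they are the honest
   (finite) coefficient formulas of products/substitutions of formal series. *)

(* Series in C((x))[[z]] : phi k m = coefficient of z^k x^m.           *)
Definition zser (K : fieldType) := nat -> int -> K.

Definition zmul (K : fieldType) (f g : zser K) : zser K :=
  fun k m => \sum_(i < k.+1) \sum_(l \in [set: int]) f i l * g (k - i)%N (m - l).

Definition zone (K : fieldType) : zser K := fun k m => ((k == 0%N) && (m == 0))%:R.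

Definition xser (K : fieldType) : zser K := fun k m => ((k == 0%N) && (m == 1))%:R.

Definition znpow (K : fieldType) (f : zser K) (j : nat) : zser K := iter j (zmul f) (zone K).

Definition binZ (K : fieldType) (n : int) (j : nat) : K :=
  (\prod_(i < j) (n%:~R - i%:R)) / (j`!)%:R.

(* Integer power phi(x,z)^n for phi with phi(x,0) = x, defined by the
   binomial expansion  phi^n = sum_j binom(n,j) x^(n-j) (phi - x)^j
   (only j <= k contributes to the coefficient of z^k).  *)
Definition zpow (K : fieldType) (phi : zser K) (n : int) : zser K :=
  fun k m => \sum_(j < k.+1)
     binZ K n j * znpow (fun k' m' => phi k' m' - xser K k' m') j k (m - n + j%:Z).

(* phi is an associate of the additive formal group:
   phi(x,z) in C((x))[[z]], phi(x,0) = x,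
   phi(phi(x,x2),x0) = phi(x,x0+x2) (coefficient of x0^a x2^b x^m). *)
Definition is_associate (K : fieldType) (phi : zser K) : Prop :=
  [/\ (forall k, exists N : int, forall m, m < N -> phi k m = 0),
      (forall m, phi 0%N m = (m == 1)%:R) &
      (forall (a b : nat) (m : int),
         \sum_(n \in [set: int]) phi a n * zpow phi n b m
         = 'C(a + b, a)%:R * phi (a + b)%N m)].

(* power series in C[[x,y]] : p i j = coefficient of x^i y^j *)
Definition pser (K : fieldType) := nat -> nat -> K.

(* the substitution p(phi(x,z), x) in C((x))[[z]] *)
Definition subst_phi (K : fieldType) (p : pser K) (phi : zser K) : zser K :=
  fun k m => \sum_(ij \in [set: nat * nat])
                p ij.1 ij.2 * zpow phi (Posz ij.1) k (m - Posz ij.2).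

Definition xmy_pow (K : fieldType) (k : nat) : pser K :=
  fun i j => if (i + j == k)%N then (-1) ^+ j * 'C(k, i)%:R else 0.

(* E(W) = Hom(W, W((x))) : a n = coefficient of x^n (an endomorphism). *)
Definition isE (K : fieldType) (W : lmodType K) (a : int -> {linear W -> W}) : Prop :=
  forall w : W, exists N : int, forall n, n < N -> a n w = 0.

(* a_1(x_1) ... a_r(x_r) w, coefficient of x_1^(n 1) ... x_r^(n r)
   (indices are 0, ..., r-1 here) *)
Definition prodE (K : fieldType) (W : lmodType K) (r : nat)
    (a : 'I_r -> int -> {linear W -> W}) (w : W) (n : 'I_r -> int) : W :=
  foldr (fun i v => a i (n i) v) w (enum 'I_r).

Definition shiftn (r : nat) (n : 'I_r -> int) (i j : 'I_r) (a b : nat) : 'I_r -> int :=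
  fun k => n k - (if k == i then Posz a else 0) - (if k == j then Posz b else 0).

(* multiplication of an r-variable W-valued series by p(x_i, x_j) *)
Definition pact (K : fieldType) (W : lmodType K) (r : nat) (p : pser K)
    (i j : 'I_r) (F : ('I_r -> int) -> W) : ('I_r -> int) -> W :=
  fun n => \sum_(ab \in [set: nat * nat]) p ab.1 ab.2 *: F (shiftn n i j ab.1 ab.2).

Definition pairs (r : nat) : seq ('I_r * 'I_r) :=
  filter (fun ij : 'I_r * 'I_r => (ij.1 < ij.2)%N)
    (allpairs (fun i j : 'I_r => (i, j)) (enum 'I_r) (enum 'I_r)).

Definition pairs_act (K : fieldType) (W : lmodType K) (r : nat) (p : pser K)
    (F : ('I_r -> int) -> W) : ('I_r -> int) -> W :=
  foldr (fun ij G => pact p ij.1 ij.2 G) F (pairs r).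

(* membership in W((x_1, ..., x_r)) *)
Definition in_Laurent (W : Type) (z : W) (r : nat) (F : ('I_r -> int) -> W) : Prop :=
  exists N : int, forall n, (exists i, n i < N) -> F n = z.

(* prod_{i<j} p(x_i,x_j) a_1(x_1)...a_r(x_r) in Hom(W, W((x_1,...,x_r))) *)
Definition good_for (K : fieldType) (W : lmodType K) (r : nat) (p : pser K)
    (a : 'I_r -> int -> {linear W -> W}) : Prop :=
  forall w : W, in_Laurent 0 (pairs_act p (prodE a w)).

Definition compatible_seq (K : fieldType) (W : lmodType K) (r : nat)
    (a : 'I_r -> int -> {linear W -> W}) : Prop :=
  exists k : nat, good_for (xmy_pow K k) a.

Definition quasi_compatible_seq (K : fieldType) (W : lmodType K) (r : nat)
    (a : 'I_r -> int -> {linear W -> W}) : Prop :=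
  exists p : pser K, p <> (fun _ _ => 0) /\ good_for p a.

Definition phi_quasi_compatible_seq (K : fieldType) (W : lmodType K) (phi : zser K)
    (r : nat) (a : 'I_r -> int -> {linear W -> W}) : Prop :=
  exists p : pser K, subst_phi p phi <> (fun _ _ => 0) /\ good_for p a.

(* subsets of E(W): every finite sequence in them *)
Definition compatible_set (K : fieldType) (W : lmodType K)
    (S : (int -> {linear W -> W}) -> Prop) : Prop :=
  forall r (a : 'I_r -> int -> {linear W -> W}), (forall i, S (a i)) -> compatible_seq a.

Definition quasi_compatible_set (K : fieldType) (W : lmodType K)
    (S : (int -> {linear W -> W}) -> Prop) : Prop :=
  forall r (a : 'I_r -> int -> {linear W -> W}), (forall i, S (a i)) ->
    quasi_compatible_seq a.

Definition phi_quasi_compatible_set (K : fieldType) (W : lmodType K) (phi : zser K)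
    (S : (int -> {linear W -> W}) -> Prop) : Prop :=
  forall r (a : 'I_r -> int -> {linear W -> W}), (forall i, S (a i)) ->
    phi_quasi_compatible_seq phi a.

(* Main.v *)
Require Import Defs.
From mathcomp Require Import all_boot all_order all_algebra.
From mathcomp Require Import boolp classical_sets fsbigop reals complex zify ring.
Set Implicit Arguments. Unset Strict Implicit. Unset Printing Implicit Defensive.
Import Order.TTheory GRing.Theory Num.Theory.
Local Open Scope ring_scope.

Lemma prod_ffact (F : numFieldType) (i j : nat) :
  \prod_(l < j) ((Posz i)%:~R - l%:R : F) = (i ^_ j)%:R.
Proof.
elim: j => [|j IH]; first by rewrite big_ord0 ffactn0.
rewrite big_ord_recr /= IH ffactnSr natrM.
case: (leqP j i) => hji.
  by rewrite natrB.
by rewrite ffact_small // !mul0r.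
Qed.

Lemma binZ_nat (F : numFieldType) (i j : nat) : binZ F i j = ('C(i, j))%:R.
Proof.
rewrite /binZ prod_ffact -bin_ffact natrM mulfK //.
by rewrite pnatr_eq0 -lt0n fact_gt0.
Qed.

Lemma regroup (V : zmodType) (n : nat) (f : nat -> nat -> V) :
  (forall i j, (n <= i + j)%N -> f i j = 0) ->
  \sum_(0 <= i < n) \sum_(0 <= j < n) f i j =
  \sum_(0 <= s < n) \sum_(0 <= i < s.+1) f i (s - i)%N.
Proof.
move=> hf.
transitivity (\sum_(0 <= s < n) \sum_(0 <= i < n | (i <= s)%N) f i (s - i)%N).
  under [RHS]eq_bigr do rewrite big_mkcond.
  rewrite [RHS]exchange_big_nat /=; apply: eq_big_nat => i /andP[_ hi].
  have -> : \sum_(0 <= s < n) (if (i <= s)%N then f i (s - i)%N else 0)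
          = \sum_(0 + i <= s < n) f i (s - i)%N.
    rewrite add0n (@big_cat_nat _ _ _ i 0 n _ _ (leq0n i) (ltnW hi)) /= big1_seq; last first.
      move=> s /andP[_]; rewrite mem_index_iota => /andP[_ h].
      by rewrite leqNgt h.
    by rewrite add0r; apply: eq_big_nat => s /andP[-> _].
  rewrite big_addn.
  rewrite (big_nat_widen 0 (n - i) n) ?leq_subr //.
  rewrite [LHS]big_mkcond [RHS]big_mkcond /=; apply: eq_big_nat => j /andP[_ hj].
  rewrite addnK; case: ifP => // hj2; rewrite hf //; lia.
apply: eq_big_nat => s /andP[_ hs].
rewrite [RHS](big_nat_widen 0 s.+1 n) //.
Qed.

Definition lbd (F : fieldType) (f : zser F) :=
  forall K : nat, exists B : int, forall (k : nat) (m : int),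
    (k <= K)%N -> m < B -> f k m = 0.

Lemma lbd_rows (F : fieldType) (f : zser F) :
  (forall k, exists N : int, forall m, m < N -> f k m = 0) -> lbd f.
Proof.
move=> h; elim=> [|K [B HB]].
  have [N HN] := h 0%N; exists N => k m; rewrite leqn0 => /eqP -> ; exact: HN.
have [N HN] := h K.+1; exists (Order.min B N) => k m hk hm.
rewrite lt_min in hm; case/andP: hm => hm1 hm2.
rewrite leq_eqVlt in hk; case/orP: hk => [/eqP ->|hk]; first exact: HN.
by apply: HB.
Qed.

Lemma lbd_zone (F : fieldType) : lbd (zone F).
Proof.
move=> K; exists 0 => k m _ hm; rewrite /zone.
have -> : (m == 0) = false by lia.
by rewrite andbF.
Qed.

Lemma lbd_zmul (F : fieldType) (f g : zser F) : lbd f -> lbd g -> lbd (zmul f g).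
Proof.
move=> hf hg K; have [Bf HBf] := hf K; have [Bg HBg] := hg K.
exists (Bf + Bg) => k m hk hm; rewrite /zmul.
apply: big1 => i _; apply: fsbig1 => l _.
have hi : (i <= K)%N by apply: leq_trans hk; rewrite -ltnS ltn_ord.
case: (ltP l Bf) => hl; first by rewrite HBf // mul0r.
rewrite HBg ?mulr0 //; last by lia.
by apply: leq_trans (leq_subr _ _) hk.
Qed.

Lemma lbd_znpow (F : fieldType) (f : zser F) j : lbd f -> lbd (znpow f j).
Proof.
move=> hf; elim: j => [|j IH]; first exact: lbd_zone.
by apply: lbd_zmul.
Qed.

Lemma znpow_low (F : fieldType) (d : zser F) (t : nat) (N : int) :
  (forall k m, (k < t)%N -> d k m = 0) ->
  (forall m, m < N -> d t m = 0) ->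
  forall j : nat,
  [/\ (forall n m, (n < j * t)%N -> znpow d j n m = 0),
      (forall m, m < Posz j * N -> znpow d j (j * t)%N m = 0) &
      znpow d j (j * t)%N (Posz j * N) = d t N ^+ j].
Proof.
move=> hd0 hdt; elim=> [|j [IHa IHb IHc]].
  split => //.
    move=> m hm; rewrite /znpow /= /zone.
    by have -> : (m == 0) = false by lia.
  by rewrite /znpow /= /zone mul0r.
have EN : Posz j.+1 * N = N + Posz j * N by rewrite -addn1 PoszD mulrDl mul1r addrC.
have Et : (j.+1 * t = t + j * t)%N by rewrite mulSn.
have znS : znpow d j.+1 = zmul d (znpow d j) by [].
have ht : (t < (j.+1 * t).+1)%N by rewrite ltnS Et leq_addr.
have key : forall m, znpow d j.+1 (j.+1 * t)%N m =
    \sum_(l \in [set: int]) d t l * znpow d j (j * t)%N (m - l).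
  move=> m; rewrite znS /zmul (bigD1 (Ordinal ht)) //= [X in _ + X]big1 ?addr0.
    by have -> : (j.+1 * t - t = j * t)%N by rewrite Et addKn.
  move=> i; rewrite -val_eqE /= => hit; apply: fsbig1 => l _.
  case: (ltnP i t) => hi; first by rewrite hd0 // mul0r.
  rewrite IHa ?mulr0 //.
  have := ltn_ord i; move: hit hi; move: (nat_of_ord i) => i' hit hi hi2.
  rewrite Et in hi2 *; lia.
split.
- move=> n m hn; rewrite znS /zmul; apply: big1 => i _; apply: fsbig1 => l _.
  case: (ltnP i t) => hi; first by rewrite hd0 // mul0r.
  rewrite IHa ?mulr0 //.
  have := ltn_ord i; lia.
- move=> m hm; rewrite key; apply: fsbig1 => l _.
  case: (ltP l N) => hl; first by rewrite hdt // mul0r.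
  rewrite IHb ?mulr0 //; lia.
- rewrite key -(fsbig_widen [set N]) //.
    rewrite fsbig_set1; have -> : Posz j.+1 * N - N = Posz j * N by rewrite EN; lia.
    by rewrite IHc exprS.
  move=> l [_ /= hl]; rewrite /preimage /=.
  have : l <> N by [].
  case: (ltgtP l N) => // hl2 _.
    by rewrite hdt // mul0r.
  rewrite IHb ?mulr0 //; lia.
Qed.

Lemma ex_minP (P : nat -> Prop) :
  (exists n, P n) -> exists n, P n /\ forall m, (m < n)%N -> ~ P m.
Proof.
move=> [n Pn]; elim/ltn_ind: n Pn => n IH Pn.
case: (pselect (exists m, (m < n)%N /\ P m)) => [[m [hm Pm]]|h].
  exact: IH m hm Pm.
by exists n; split=> // m hm Pm; apply: h; exists m.
Qed.

Definition Qc (F : fieldType) (p : pser F) (j s : nat) : F :=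
  \sum_(0 <= i < s.+1) p i (s - i)%N * ('C(i, j))%:R.

Lemma Qc_nz (F : fieldType) (p : pser F) :
  p <> (fun _ _ => 0) -> exists j s, Qc p j s <> 0.
Proof.
move=> hp; apply: contra_notP hp => hQ.
have hQ0 : forall j s, Qc p j s = 0.
  move=> j s; apply: contra_notP hQ => h; by exists j, s.
apply/funext => i; apply/funext => j.
suff H : forall s e, (e <= s)%N -> p (s - e)%N e = 0.
  by have := H (i + j)%N j (leq_addl _ _); rewrite addnK.
move=> s; elim/ltn_ind => e IH hes.
have := hQ0 (s - e)%N s; rewrite /Qc big_mkord.
have hi : (s - e < s.+1)%N by rewrite ltnS leq_subr.
rewrite (bigD1 (Ordinal hi)) //= big1 ?addr0.
  by rewrite subKn // binn mulr1.
move=> k; rewrite -val_eqE /= => hk.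
case: (ltnP k (s - e)) => hk2; first by rewrite bin_small // mulr0.
have hk3 : (k <= s)%N by rewrite -ltnS.
have hlt : (s - k < e)%N.
  move: hk hk2 hk3; move: (nat_of_ord k) => k' ; lia.
by have := IH (s - k)%N hlt (leq_subr _ _); rewrite subKn // => ->; rewrite mul0r.
Qed.

Lemma lbd_unif (F : fieldType) (G : nat -> zser F) (n0 : nat) :
  (forall j, lbd (G j)) ->
  forall J, exists B : int, forall j m, (j <= J)%N -> m < B -> G j n0 m = 0.
Proof.
move=> hG; elim=> [|J [B HB]].
  have [B HB] := hG 0%N n0; exists B => j m; rewrite leqn0 => /eqP -> hm.
  exact: HB.
have [B' HB'] := hG J.+1 n0; exists (Order.min B B') => j m hj hm.
rewrite lt_min in hm; case/andP: hm => hm1 hm2.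
rewrite leq_eqVlt in hj; case/orP: hj => [/eqP ->|hj]; first exact: HB'.
exact: HB.
Qed.

Lemma subst_nz (F : numFieldType) (phi : zser F) (p : pser F) :
  (forall k, exists N : int, forall m, m < N -> phi k m = 0) ->
  (forall m, phi 0%N m = (m == 1)%:R) ->
  phi <> xser F -> p <> (fun _ _ => 0) -> subst_phi p phi <> (fun _ _ => 0).
Proof.
move=> hlb h0 hx hp.
set d : zser F := fun k m => phi k m - xser F k m.
have d0 : forall m, d 0%N m = 0 by move=> m; rewrite /d h0 /xser /= subrr.
have [t [[m0 hm0] tmin]] : exists t, (exists m, d t m <> 0) /\
    forall k, (k < t)%N -> ~ exists m, d k m <> 0.
  apply: ex_minP; apply: contra_notP hx => h.
  apply/funext => k; apply/funext => m; apply/eqP; rewrite -subr_eq0; apply/eqP.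
  apply: contra_notP h => h; by exists k, m.
have hd0 : forall k m, (k < t)%N -> d k m = 0.
  move=> k m hk; apply: contra_notP (tmin k hk) => h; by exists m.
have t0 : (0 < t)%N.
  rewrite lt0n; apply/eqP => t0; apply: hm0; rewrite t0; exact: d0.
have [Nphi HNphi] := hlb t.
have dlow : forall m, m < Nphi -> d t m = 0.
  move=> m hm; rewrite /d HNphi // /xser; move: (t0); rewrite lt0n => /negbTE ->.
  by rewrite subr0.
have [k0 [hk0 k0min]] : exists k, d t (Nphi + Posz k) <> 0 /\
    forall k', (k' < k)%N -> ~ d t (Nphi + Posz k') <> 0.
  apply: ex_minP; exists `|m0 - Nphi|%N.
  case: (ltP m0 Nphi) => hm; first by exfalso; apply: hm0; apply: dlow.
  by have -> : Nphi + Posz `|m0 - Nphi|%N = m0 by lia.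
set N := Nphi + Posz k0.
have hdt : forall m, m < N -> d t m = 0.
  move=> m hm; case: (ltP m Nphi) => hm2; first exact: dlow.
  have hk : (`|m - Nphi| < k0)%N by rewrite /N in hm; lia.
  have := k0min _ hk; have -> : Nphi + Posz `|m - Nphi|%N = m by lia.
  by move=> h; apply: contra_notP h => h'; exact: h'.
set c := d t N.
have cnz : c != 0 by apply/eqP.
have LOW := znpow_low hd0 hdt.
have [s0 [[s1' hs1'] s0min]] := ex_minP (Qc_nz hp).
have [s1 [hs1 s1min]] := @ex_minP (fun s => Qc p s0 s <> 0) (ex_intro _ s1' hs1').
set n0 := (s0 * t)%N.
set M0 : int := Posz s0 * N + Posz s1 - Posz s0.
have lbdd : lbd d.
  apply: lbd_rows => k; have [Nk HNk] := hlb k.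
  exists (Order.min Nk 0) => m; rewrite lt_min => /andP[h1 h2].
  rewrite /d HNk // /xser.
  have -> : (m == 1) = false by lia.
  by rewrite andbF subr0.
have [B HB] := lbd_unif n0 (fun j => lbd_znpow j lbdd) n0.
set K : nat := (absz (M0 + Posz n0 - B)%R + s1).+1.
have fz : forall i j, (K <= i + j)%N -> p i j * zpow phi i n0 (M0 - Posz j) = 0.
  move=> i j hij; rewrite /zpow big1 ?mulr0 // => j' _.
  have hj' : (j' <= n0)%N by rewrite -ltnS ltn_ord.
  rewrite HB ?mulr0 //; rewrite /K in hij; move: hj' hij; move: (nat_of_ord j') => j''.
  lia.
move=> H; have := congr1 (fun f => f n0 M0) H => /= {H}.
have stepA : subst_phi p phi n0 M0 = \sum_(0 <= i < K) \sum_(0 <= j < K)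
      p i j * zpow phi i n0 (M0 - Posz j).
  rewrite /subst_phi.
  set r := [seq (i, j) | i <- index_iota 0 K, j <- index_iota 0 K].
  rewrite -(fsbig_widen [set` r] setT) //; last first.
    move=> [i j] [_ /= hn]; rewrite /preimage /=.
    case: (leqP K (i + j)) => hij; first exact: fz.
    exfalso; apply: hn; apply: allpairs_f; rewrite mem_index_iota; lia.
  rewrite -fsbig_seq; first by rewrite big_allpairs.
  apply: allpairs_uniq; try exact: iota_uniq.
  by move=> [a b] [a' b'] _ _ /= ->.
rewrite stepA (@regroup _ K (fun i j => p i j * zpow phi i n0 (M0 - Posz j))) //.
have stepC : forall s, \sum_(0 <= i < s.+1) p i (s - i)%N * zpow phi i n0 (M0 - Posz (s - i)%N)
   = \sum_(j < n0.+1) Qc p j s * znpow d j n0 (M0 - Posz s + Posz j).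
  move=> s.
  transitivity (\sum_(0 <= i < s.+1) \sum_(j < n0.+1)
      p i (s - i)%N * ('C(i, j))%:R * znpow d j n0 (M0 - Posz s + Posz j)).
    apply: eq_big_nat => i /andP[_ hi]; rewrite /zpow mulr_sumr; apply: eq_bigr => j _.
    rewrite binZ_nat mulrA.
    have -> : M0 - Posz (s - i)%N - Posz i + Posz j = M0 - Posz s + Posz j by lia.
    by [].
  by rewrite exchange_big /=; apply: eq_bigr => j _; rewrite /Qc mulr_suml.
under eq_bigr do rewrite stepC.
have Qlow : forall j s, (j < s0)%N -> Qc p j s = 0.
  move=> j s hj; apply: contra_notP (s0min j hj) => h; by exists s.
have Dhigh : forall j m, (s0 < j)%N -> znpow d j n0 m = 0.
  move=> j m hj; have [LA _ _] := LOW j; apply: LA; rewrite /n0 ltn_pmul2r //.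
have inner0 : forall s, s != s1 ->
    \sum_(j < n0.+1) Qc p j s * znpow d j n0 (M0 - Posz s + Posz j) = 0.
  move=> s hs; apply: big1 => j _.
  case: (ltngtP j s0) => hj; first by rewrite Qlow // mul0r.
    by rewrite Dhigh // mulr0.
  rewrite hj; case: (ltngtP s s1) => hs2.
  - by rewrite (contra_notP (fun h => h) (s1min s hs2)) mul0r.
  - have [_ LB _] := LOW s0; rewrite LB ?mulr0 //; lia.
  - by rewrite hs2 eqxx in hs.
have hs1K : (s1 < K)%N by rewrite /K ltnS leq_addl.
have hs0n : (s0 < n0.+1)%N by rewrite ltnS /n0 leq_pmulr.
rewrite big_mkord (bigD1 (Ordinal hs1K)) //= [X in _ + X]big1 ?addr0; last first.
  by move=> s hs; apply: inner0.
rewrite (bigD1 (Ordinal hs0n)) //= [X in _ + X]big1 ?addr0; last first.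
  move=> j hj.
  case: (ltngtP j s0) => hj2; first by rewrite Qlow // mul0r.
    by rewrite Dhigh // mulr0.
  by move: hj; rewrite -val_eqE /= hj2 eqxx.
have -> : M0 - Posz s1 + Posz s0 = Posz s0 * N by rewrite /M0; lia.
have [_ _ LC] := LOW s0; rewrite LC => /eqP; apply/negP.
by rewrite mulf_neq0 // ?expf_neq0 //; apply/eqP.
Qed.

Theorem lemma4p4 (R : realType) (W : lmodType R[i]) (phi : zser R[i]) :
  is_associate phi -> phi <> xser R[i] ->
  (forall S : (int -> {linear W -> W}) -> Prop,
      (forall a, S a -> isE a) -> compatible_set S -> phi_quasi_compatible_set phi S) /\
  (forall S : (int -> {linear W -> W}) -> Prop,
      (forall a, S a -> isE a) -> quasi_compatible_set S -> phi_quasi_compatible_set phi S).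
Proof.
move=> [hlb h0 _] hx; split => S _ hS r a ha.
- have [k hk] := hS r a ha; exists (xmy_pow _ k); split => //.
  apply: subst_nz => //.
  move=> /(congr1 (fun f => f k 0%N)) /=.
  rewrite /xmy_pow addn0 eqxx expr0 mul1r binn => /eqP; by rewrite oner_eq0.
- have [p [hp hg]] := hS r a ha; exists p; split => //.
  exact: subst_nz.
Qed.
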